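(* For $n\ge 6$, let $W_n$ be the wheel graph on $n$ vertices, i.e. the join of a cycle $C_{n-1}$ with a single vertex $c$ adjacent to all vertices of the cycle. Then $\mathcal{R}(W_n)=\frac{(n-3)(n^2+8)}{2(n-2)(4n-13)}$.
   Context: All graphs are finite, simple and connected, with at least two vertices; $d(u,v)$ denotes the shortest-path distance. $V_p$ denotes the set of all unordered pairs $(u,v)$ of distinct vertices. A vertex $x$ resolves the pair $(u,v)$ if $d(x,u)\neq d(x,v)$. For $(u,v)\in V_p$, $R(u,v)$ is the set of all vertices resolving $(u,v)$ (it always contains $u$ and $v$). The resolving share of a vertex $w$ for $(u,v)$ is $r_w(u,v)=\frac{1}{|R(u,v)|}$ if $w$ resolves $u$ and $v$, and $r_w(u,v)=0$ otherwise. For a vertex $w$, $R(w)$ is the set of pairs in $V_p$ resolved by $w$. The average resolving share of $w$ is $ar_w(G)=\frac{1}{|R(w)|}\sum_{(u,v)\in R(w)} r_w(u,v)$, and the resolving topological index of $G$ is $\mathcal{R}(G)=\sum_{w\in V(G)} ar_w(G)$. *)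

(* Defs.v *)
From mathcomp Require Import all_boot all_order all_algebra.
Set Implicit Arguments. Unset Strict Implicit. Unset Printing Implicit Defensive.
Import Order.TTheory GRing.Theory Num.Theory.

Section Graph.
Variables (T : finType) (e : rel T).

Fixpoint walk (k : nat) (x y : T) : bool :=
  if k is k'.+1 then [exists z, e x z && walk k' z y] else x == y.

(* shortest-path distance: least k with a walk of length k from x to y
   (a shortest walk is a path; in a connected graph k < #|T| always exists) *)
Definition dist (x y : T) : nat := find (fun k => walk k x y) (iota 0 #|T|).

Definition Vp : {set {set T}} := [set P : {set T} | #|P| == 2].

Definition resolves (x : T) (P : {set T}) : bool :=
  [exists u in P, exists v in P, dist x u != dist x v].

Definition Rpair (P : {set T}) : {set T} := [set x | resolves x P].

Local Open Scope ring_scope.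
Definition rshare (w : T) (P : {set T}) : rat :=
  if resolves w P then (#|Rpair P|%:R)^-1 else 0.

Definition Rvert (w : T) : {set {set T}} := [set P in Vp | resolves w P].

Definition ar (w : T) : rat :=
  (#|Rvert w|%:R)^-1 * \sum_(P in Rvert w) rshare w P.

Definition RTI : rat := \sum_(w : T) ar w.
Local Close Scope ring_scope.
End Graph.

(* Wheel graph W_n on vertex set 'I_n: vertex 0 is the hub c, and
   vertices 1..n-1 form the cycle C_{n-1} (i ~ i+1, and n-1 ~ 1). *)
Definition cyc_adj (m a b : nat) : bool :=
  (a.+1 %% m == b) || (b.+1 %% m == a).

Definition wheel (n : nat) : rel 'I_n :=
  fun i j => (i != j) &&
    [|| val i == 0, val j == 0 | cyc_adj n.-1 (val i).-1 (val j).-1].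
Arguments wheel n : clear implicits.

(* Main.v *)
Require Import Defs.
From mathcomp Require Import all_boot all_order all_algebra.
From mathcomp Require Import zify ring lra.
Import GRing.Theory Num.Theory.
Set Implicit Arguments. Unset Strict Implicit. Unset Printing Implicit Defensive.

Lemma nbr_nat n i j : 6 <= n -> 0 < i < n -> j < n ->
  ((i != j) && [|| i == 0, j == 0 | cyc_adj (n.-1) i.-1 j.-1]) =
  [|| j == 0, j == (if i == n.-1 then 1 else i.+1) | j == (if i == 1 then n.-1 else i.-1)].
Proof.
move=> hn /andP[hi0 hin] hj.
rewrite /cyc_adj.
have E1 : forall a, a < n.-1 -> a.+1 %% n.-1 = if a.+1 == n.-1 then 0 else a.+1.
  move=> a ha; case: eqP => [->|h]; first by rewrite modnn.
  by rewrite modn_small //; lia.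
case: (j =P 0) => [->|hj0] /=.
  by rewrite (_ : i != 0) //; lia.
rewrite (_ : (i == 0) = false); last lia.
rewrite E1; last lia.
rewrite E1; last lia.
case: (i =P n.-1) => hi1; case: (i =P 1) => hi2;
case: (j =P i) => hij;
case: (i.-1.+1 =P n.-1) => h1; case: (j.-1.+1 =P n.-1) => h2 /=;
  apply/idP/idP; lia.
Qed.

Section W.
Variable n : nat.
Hypothesis hn : 6 <= n.
Variable h : 'I_n.
Hypothesis hh : val h = 0.

Lemma wsym (i j : 'I_n) : wheel n i j = wheel n j i.
Proof. rewrite /wheel /cyc_adj eq_sym; congr (_ && _); rewrite orbA [(_ || (val j == 0))]orbC -orbA; congr (_ || (_ || _)); apply: orbC. Qed.

Lemma wirr (i : 'I_n) : wheel n i i = false.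
Proof. by rewrite /wheel eqxx. Qed.

Lemma whub (j : 'I_n) : wheel n h j = (j != h).
Proof. by rewrite /wheel hh eqxx /= andbT eq_sym. Qed.

Lemma whub' (j : 'I_n) : wheel n j h = (j != h).
Proof. by rewrite wsym whub. Qed.

Lemma deg (i : 'I_n) : i != h -> #|[set j | wheel n i j]| = 3.
Proof.
case: i => i Hi; rewrite -val_eqE hh /= => hi.
have hi0 : 0 < i < n by lia.
pose a := if i == n.-1 then 1 else i.+1.
pose b := if i == 1 then n.-1 else i.-1.
have ha : a < n by rewrite /a; case: ifP => ?; lia.
have hb : b < n by rewrite /b; case: ifP => ?; lia.
have -> : [set j | wheel n (Ordinal Hi) j] = [set h; Ordinal ha; Ordinal hb].
  apply/setP => j; rewrite !inE -!val_eqE /= hh.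
  have := nbr_nat hn hi0 (ltn_ord j). rewrite /wheel -!val_eqE /= => ->.
  by rewrite -orbA.
rewrite setUC !cardsU1 cards1 !inE -!val_eqE /= hh /a /b.
case: ifP; case: ifP => /=; lia.
Qed.

End W.

Lemma resolves2 (T : finType) (e : rel T) x u v : u != v ->
  resolves e x [set u; v] = (dist e x u != dist e x v).
Proof.
move=> uv; apply/exists_inP/idP.
  move=> [u' /set2P hu /exists_inP [v' /set2P hv]].
  case: hu => ->; case: hv => -> //; first by rewrite eqxx.
    by rewrite eq_sym.
  by rewrite eqxx.
move=> H; exists u; first by rewrite !inE eqxx.
by apply/exists_inP; exists v => //; rewrite !inE eqxx orbT.
Qed.

Lemma walk1 (T : finType) (e : rel T) x y : walk e 1 x y = e x y.
Proof.
apply/existsP/idP => [[z /andP[H /eqP <-]] //|H]; by exists y; rewrite H eqxx.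
Qed.

Lemma iota3 m : 2 < m -> iota 0 m = [:: 0, 1, 2 & iota 3 (m-3)].
Proof. by case: m => [|[|[|k]]] //= _; rewrite subSS subSS subSS subn0. Qed.

Lemma binom4 k : 'C(k.+4, 2) = 'C(k, 2) + 4 * k + 6.
Proof. rewrite !binS !bin1 !bin0. lia. Qed.

Section W.
Variable n : nat.
Hypothesis hn : 6 <= n.
Variable h : 'I_n.
Hypothesis hh : val h = 0.

Lemma distW (x y : 'I_n) : dist (wheel n) x y =
  if x == y then 0 else if wheel n x y then 1 else 2.
Proof.
have w2 : x != y -> ~~ wheel n x y -> walk (wheel n) 2 x y.
  move=> xy nw.
  have xh : x != h by apply/eqP => E; move: nw xy; rewrite E whub // negbK => /eqP ->; rewrite eqxx.
  have yh : y != h by apply/eqP => E; move: nw; rewrite E whub' // xh.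
  apply/existsP; exists h; rewrite whub' // xh /=.
  by apply/existsP; exists y; rewrite whub // yh eqxx.
rewrite /dist iota3; last by rewrite card_ord; lia.
rewrite /= -/(walk (wheel n) 1 x y) walk1.
case: eqP => [//|/eqP xy].
case: ifP => // nw.
by have := w2 xy (negbT nw) => /= ->.
Qed.

Lemma dhub x : dist (wheel n) h x = if x == h then 0 else 1.
Proof. by rewrite distW whub // eq_sym; case: (x == h). Qed.

Lemma dhub' x : dist (wheel n) x h = if x == h then 0 else 1.
Proof. by rewrite distW whub' //; case: (x == h). Qed.

Lemma Rvert_hubP P : P \in Rvert (wheel n) h -> exists r, r != h /\ P = [set h; r].
Proof.
rewrite !inE => /andP[/cards2P [u [v [uv ->]]]].
rewrite resolves2 // !dhub.
case: (eqVneq u h) => [->|uh]; case: (eqVneq v h) => [->|vh] //.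
- by move=> _; exists v.
- by move=> _; exists u; split => //; rewrite setUC.
Qed.

Lemma Rvert_hubE : Rvert (wheel n) h = [set [set h; r] | r in [set~ h]].
Proof.
apply/setP => P; apply/idP/imsetP.
  by move/Rvert_hubP => [r [rh ->]]; exists r => //; rewrite !inE.
move=> [r]; rewrite !inE => rh ->.
by rewrite cards2 (eq_sym h r) rh /= resolves2 1?(eq_sym h r) // !dhub eqxx (negbTE rh).
Qed.

Lemma card_Rvert_hub : #|Rvert (wheel n) h| = n.-1.
Proof.
rewrite Rvert_hubE card_in_imset ?cardsC1 ?card_ord //.
move=> r s; rewrite !inE => rh sh E.
have : r \in [set h; s] by rewrite -E !inE eqxx orbT.
by rewrite !inE (negbTE rh) => /eqP.
Qed.

Lemma card_Rpair_hub r : r != h -> #|Rpair (wheel n) [set h; r]| = n - 2.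
Proof.
move=> rh.
have E : ~: Rpair (wheel n) [set h; r] = [set x | wheel n r x] :\ h.
  apply/setP => x; rewrite !inE resolves2 1?eq_sym // negbK dhub' (distW x r).
  case: (eqVneq x h) => [->|xh]; first by rewrite (eq_sym h r) (negbTE rh) whub // rh.
  case: (x =P r) => [->|/eqP xr]; first by rewrite ?eqxx ?wirr.
  by rewrite wsym; case: (wheel n r x).
have := cardsC (Rpair (wheel n) [set h; r]).
rewrite E card_ord.
have := cardsD1 h [set x | wheel n r x].
rewrite (deg hn hh rh) inE whub' // => H1 H2.
lia.
Qed.

Lemma card_Vp : #|Vp 'I_n| = 'C(n, 2).
Proof. by rewrite /Vp card_draws card_ord. Qed.

Lemma card_Rvert_rim w : w != h -> #|Rvert (wheel n) w| = 4 * n - 13.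
Proof.
move=> wh.
pose N := [set x | wheel n w x].
pose F := [set x | (w != x) && ~~ wheel n w x].
pose D (A : {set 'I_n}) := [set P : {set 'I_n} | P \subset A & #|P| == 2].
have cN : #|N| = 3 by apply: (deg hn hh wh).
have cF : #|F| = n - 4.
  have -> : F = ~: (w |: N) by apply/setP => x; rewrite !inE negb_or (eq_sym x w).
  have := cardsC (w |: N); rewrite cardsU1 cN inE wirr card_ord /=; lia.
have E : [set P in Vp 'I_n | ~~ resolves (wheel n) w P] = D N :|: D F.
  apply/setP => P; rewrite !inE.
  case: (cards2P P) => [[u [v [uv ->]]]|_]; last by rewrite !andbF.
  rewrite !andbT /= resolves2 // negbK !subUset !sub1set !inE !distW.
  case: (w =P u) => [Eu|/eqP wu]; case: (w =P v) => [Ev|/eqP wv];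
    try subst; rewrite ?wirr ?eqxx //=; try by rewrite eqxx in uv.
  all: try by do 2?case: (wheel n _ _).
have dis : D N :&: D F = set0.
  apply/setP => P; rewrite !inE.
  case: (cards2P P) => [[u [v [uv ->]]]|_]; last by rewrite !andbF.
  rewrite !subUset !sub1set !inE.
  by case: (wheel n w u); rewrite /= ?andbF.
have := cardsID [set P | resolves (wheel n) w P] (Vp 'I_n).
have -> : Vp 'I_n :&: [set P | resolves (wheel n) w P] = Rvert (wheel n) w.
  by apply/setP => P; rewrite !inE.
have -> : Vp 'I_n :\: [set P | resolves (wheel n) w P] =
          [set P in Vp 'I_n | ~~ resolves (wheel n) w P].
  by apply/setP => P; rewrite !inE andbC.
rewrite E cardsU dis cards0 subn0 card_Vp !cards_draws cN cF.
have := binom4 (n - 4); rewrite (_ : (n - 4).+4 = n); last lia.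
rewrite (_ : 'C(3, 2) = 3) //.
move=> H1; rewrite H1 => H2. set R := #|Rvert _ _| in H2 *. set C := (binomial _ _) in H2. Show. lia.
Qed.
End W.

Local Open Scope ring_scope.

Lemma sum_Rvert_Vp (T : finType) (e : rel T) w :
  \sum_(P in Rvert e w) rshare e w P = \sum_(P in Vp T) rshare e w P.
Proof.
rewrite big_mkcond [RHS]big_mkcond; apply: eq_bigr => P _.
by rewrite /Rvert inE /rshare; case: (P \in Vp T); case: (resolves e w P).
Qed.

Lemma sum_rshare (T : finType) (e : rel T) P : (0 < #|Rpair e P|)%N ->
  \sum_w rshare e w P = 1.
Proof.
move=> H.
rewrite /rshare -big_mkcond /=.
rewrite (eq_bigl (fun w => w \in Rpair e P)); last by move=> w; rewrite inE.
rewrite sumr_const -[_ *+ _]mulr_natr mulVf //.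
by rewrite pnatr_eq0 -lt0n.
Qed.

Lemma bin2' k : ('C(k, 2) * 2 = k * k.-1)%N.
Proof.
elim: k => [//|k IH]; rewrite binS bin1 mulnDl IH; case: k {IH} => //= k; lia.
Qed.

Unset Implicit Arguments.

Theorem theorem3p11 (n : nat) (hn : (6 <= n)%N) :
  RTI (wheel n) =
  ((n%:R - 3) * (n%:R ^+ 2 + 8)) / (2 * (n%:R - 2) * (4 * n%:R - 13)) :> rat.
Proof.
have h0 : (0 < n)%N by lia.
pose h := Ordinal h0.
have hh : val h = 0%N by [].
have Sh : \sum_(P in Rvert (wheel n) h) rshare (wheel n) h P = (n.-1)%:R / (n - 2)%:R.
  rewrite (eq_bigr (fun _ => ((n - 2)%:R)^-1)); last first.
    move=> P HP; have := HP; move/(Rvert_hubP hn hh) => [r [rh EP]].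
    move: HP; rewrite /rshare inE => /andP[_ ->].
    by rewrite EP (card_Rpair_hub hn hh rh).
  by rewrite sumr_const (card_Rvert_hub hn hh) -[_ *+ _]mulr_natr mulrC.
have Hrim : forall w, w != h -> ar (wheel n) w =
    ((4 * n - 13)%N%:R)^-1 * \sum_(P in Vp 'I_n) rshare (wheel n) w P.
  by move=> w wh; rewrite /ar (card_Rvert_rim hn hh wh) sum_Rvert_Vp.
rewrite /RTI (bigD1 h) //=.
rewrite (eq_bigr _ Hrim) -mulr_sumr exchange_big /=.
rewrite (eq_bigr (fun P => 1 - rshare (wheel n) h P)); last first.
  move=> P HP.
  rewrite -(@sum_rshare _ (wheel n) P); last first.
    move: HP; rewrite inE => /cards2P [u [v [uv ->]]].
    apply/card_gt0P; exists u; rewrite inE resolves2 // !(distW hn hh) eqxx (negbTE uv).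
    by case: (wheel n u v).
  by rewrite [in RHS](bigD1 h) //= addrC addrK.
rewrite big_split /= sumrN sumr_const -sum_Rvert_Vp Sh /ar Sh (card_Rvert_hub hn hh).
rewrite -/(Vp 'I_n) card_Vp.
have hx : (6 : rat) <= n%:R by rewrite (ler_nat rat 6 n).
have E1 : (n.-1)%:R = n%:R - 1 :> rat by rewrite -subn1 natrB //; lia.
have E2 : (n - 2)%:R = n%:R - 2 :> rat by rewrite natrB //; lia.
have E3 : (4 * n - 13)%:R = 4 * n%:R - 13 :> rat by rewrite natrB ?natrM //; lia.
have E4 : 'C(n, 2)%:R = n%:R * (n%:R - 1) / 2 :> rat.
  have := congr1 (fun m => m%:R : rat) (bin2' n); rewrite /= !natrM E1 => <-.
  by rewrite mulfK.
rewrite E1 E2 E3 E4.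
set x : rat := n%:R in hx *.
field.
rewrite -/x; clearbody x; move: hx; clear => hx.
apply/and3P; split; apply/eqP => H; lra.
Qed.
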